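(* Let $G$ be a snark, let $uwv$ be a path of length two in $G$, let $N=\operatorname{Neg}(G;u,v)$, let $x\in\{u,v\}$ and $y\in V(N)$. Assume that for every edge $e$ incident with $x$ in $G$ there is an edge $f$ incident with $y$ in $G$ such that $\{e,f\}$ is an essential pair of edges of $G$. Then for any two dangling edges $e',f'$ of the $6$-pole $G-\{x,y\}$ that were formerly incident with $x$, there exists a colouring $\varphi$ of $G-\{x,y\}$ with $\varphi(e')=\varphi(f')$.
   Context: A colouring of a graph or multipole is an assignment of three colours to its edges such that edge ends meeting at any vertex have distinct colours. A snark is a connected cubic graph (loops and parallel edges allowed) with no colouring. Negator: for a snark $G$ and a path $uwv$ in $G$, $\operatorname{Neg}(G;u,v)$ is the multipole obtained by deleting $u,w,v$ from $G$ (edges to remaining vertices become dangling edges); $V(N)$ denotes its vertex set. $G-\{x,y\}$ denotes the multipole obtained by deleting the vertices $x,y$, where edges joining them to other vertices become dangling edges and an edge $xy$, if present, is kept as an isolated edge (so it is a $6$-pole). A pair $\{e,f\}$ of edges of a snark $G$ is essential if the graph $G-\{e,f\}$ (delete the two edges, keep all vertices) is colourable and, for every $2$-valent vertex $z$ of $G-\{e,f\}$, the graph obtained from $G-\{e,f\}$ by suppressing $z$ (replacing the two edges at $z$ by a single edge) is colourable. *)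

(* Defs.v *)
(* Graphs and multipoles (loops, parallel edges, dangling and isolated edges
   allowed) are represented by their edge ends: an edge type E (a finType),
   each edge e has two ends (e, true) and (e, false); an end is either attached
   to a vertex (Some v) or free (None).  A graph is the case where every end is
   attached.  Only the edges in a set A : {set E} are present. *)
From mathcomp Require Import all_boot.
Set Implicit Arguments. Unset Strict Implicit. Unset Printing Implicit Defensive.

Section Multipoles.
Variables (V E : finType).

Definition mpole := E -> bool -> option V.

Definition graph := E -> bool -> V.

Definition as_mpole (G : graph) : mpole := fun e b => Some (G e b).

(* c is a 3-edge-colouring of the multipole (att, A): edge ends of present
   edges meeting at a common vertex have distinct colours.  (A loop at a vertex
   gives two distinct ends at that vertex, so it is never colourable.) *)
Definition colouring (att : mpole) (A : {set E}) (c : E -> 'I_3) : Prop :=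
  forall d1 d2 : E * bool, d1 != d2 -> d1.1 \in A -> d2.1 \in A ->
    att d1.1 d1.2 != None -> att d1.1 d1.2 = att d2.1 d2.2 ->
    c d1.1 != c d2.1.

Definition colourable (att : mpole) (A : {set E}) : Prop :=
  exists c : E -> 'I_3, colouring att A c.

Definition valency (att : mpole) (A : {set E}) (z : V) : nat :=
  #|[set d : E * bool | (d.1 \in A) && (att d.1 d.2 == Some z)]|.

Definition cubic (G : graph) : Prop :=
  forall z : V, valency (as_mpole G) setT z = 3.

Definition adjacent (G : graph) : rel V :=
  fun a b => [exists e : E, exists s : bool, (G e s == a) && (G e (~~ s) == b)].

Definition connected_graph (G : graph) : Prop :=
  forall a b : V, connect (adjacent G) a b.

Definition snark (G : graph) : Prop :=
  connected_graph G /\ cubic G /\ ~ colourable (as_mpole G) setT.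

Definition path2 (G : graph) (u w v : V) : Prop :=
  [/\ u != w, w != v, u != v, adjacent G u w & adjacent G w v].

(* vertex set of the negator Neg(G;u,v) = V(G) \ {u,w,v} *)
Definition in_negator (u w v y : V) : Prop :=
  [/\ y != u, y != w & y != v].

Definition incident (G : graph) (e : E) (z : V) : Prop :=
  exists s : bool, G e s = z.

(* G - {x,y}: ends at x or y become free; all edges kept (an edge xy becomes
   an isolated edge) *)
Definition delv (G : graph) (x y : V) : mpole :=
  fun e s => if (G e s == x) || (G e s == y) then None else Some (G e s).

Definition dangling_from (G : graph) (x y : V) (e : E) : Prop :=
  exists s : bool, [/\ G e s = x, G e (~~ s) != x & G e (~~ s) != y].

(* suppression of a 2-valent vertex z whose two edge ends are d1 and d2:
   the end d1 is re-attached to the far end of d2's edge, and d2's edge is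
   removed; z is left with no edge ends. *)
Definition suppress_att (att : mpole) (d1 d2 : E * bool) : mpole :=
  fun e s => if (e, s) == d1 then att d2.1 (~~ d2.2) else att e s.

Definition suppress_set (A : {set E}) (d2 : E * bool) : {set E} := A :\ d2.1.

Definition essential (G : graph) (e f : E) : Prop :=
  let A := setT :\ e :\ f in
  [/\ e != f,
      colourable (as_mpole G) A &
      forall (z : V) (d1 d2 : E * bool),
        valency (as_mpole G) A z = 2 ->
        d1 != d2 -> d1.1 \in A -> d2.1 \in A ->
        G d1.1 d1.2 = z -> G d2.1 d2.2 = z ->
        colourable (suppress_att (as_mpole G) d1 d2) (suppress_set A d2)].

End Multipoles.

(* Main.v *)
Require Import Defs.
From mathcomp Require Import all_boot.
Set Implicit Arguments. Unset Strict Implicit.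

Lemma other_end (s b : bool) : b != s -> b = ~~ s.
Proof. by case: b; case: s. Qed.

Lemma ext (V E : finType) (att : mpole V E) (B : {set E}) c h s :
  colouring att B c -> att h s = None ->
  (forall z, #|[set d : E * bool | att d.1 d.2 == Some z]| <= 3) ->
  exists k, colouring att (h |: B) (fun e => if e == h then k else c e).
Proof.
move=> Hc Hs Hv.
have hb : forall b, att h b != None -> b = ~~ s.
  move=> b Hb; apply: other_end; apply: contraNneq Hb => ->; by rewrite Hs.
case Hb: (att h (~~ s)) => [z|]; last first.
  exists ord0; rewrite /colouring => -[e1 b1] - [e2 b2] /= Hne; rewrite !inE => He1 He2 Hn Heq.
  case: (eqVneq e1 h) => [E1|N1].
    by subst e1; have HH := hb _ Hn; rewrite HH Hb in Hn.
  case: (eqVneq e2 h) => [E2|N2].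
    subst e2; have Hn2 : att h b2 != None by rewrite -Heq.
    by have HH := hb _ Hn2; rewrite HH Hb in Hn2.
  move: He1 He2; rewrite (negbTE N1) (negbTE N2) /= => He1 He2.
  exact: (Hc (e1, b1) (e2, b2)).
pose D := [set d : E * bool | (d.1 \in B) && (att d.1 d.2 == Some z) && (d != (h, ~~ s))].
pose F := [set c d.1 | d in D].
have HF : #|F| < 3.
  apply: leq_ltn_trans (leq_imset_card _ _) _.
  have := Hv z; rewrite (cardsD1 (h, ~~ s)) inE /= Hb eqxx /= => H.
  apply: leq_ltn_trans H.
  apply: subset_leq_card; apply/subsetP => d; rewrite !inE.
  by case/andP => /andP [_ ->] ->.
have : 0 < #|~: F|.
  have := cardsC F; rewrite card_ord => H.
  by rewrite -(ltn_add2l #|F|) addn0 H.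
case/card_gt0P => k; rewrite inE => kF.
exists k; rewrite /colouring => -[e1 b1] - [e2 b2] /= Hne; rewrite !inE => He1 He2 Hn Heq.
case: (eqVneq e1 h) => [E1|N1]; case: (eqVneq e2 h) => [E2|N2].
- subst e1 e2; have Hn2 : att h b2 != None by rewrite -Heq.
  by rewrite (hb _ Hn) (hb _ Hn2) eqxx in Hne.
- subst e1; rewrite (hb _ Hn) in Heq.
  move: He2; rewrite (negbTE N2) /= => He2.
  apply: contraNneq kF => ->; apply/imsetP; exists (e2, b2) => //.
  rewrite !inE /= He2 -Heq Hb eqxx /=.
  by apply: contraNneq N2 => -[->].
- subst e2; have Hn2 : att h b2 != None by rewrite -Heq.
  rewrite (hb _ Hn2) in Heq.
  move: He1; rewrite (negbTE N1) /= => He1.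
  rewrite eq_sym; apply: contraNneq kF => ->; apply/imsetP; exists (e1, b1) => //.
  rewrite !inE /= He1 Heq Hb eqxx /=.
  by apply: contraNneq N1 => -[->].
- move: He1 He2; rewrite (negbTE N1) (negbTE N2) /= => He1 He2.
  exact: (Hc (e1, b1) (e2, b2)).
Qed.
Theorem lemma14 (V E : finType) (G : graph V E) (u w v x y : V) :
  snark G -> path2 G u w v ->
  (x = u \/ x = v) -> in_negator u w v y ->
  (forall e : E, incident G e x -> exists f : E, incident G f y /\ essential G e f) ->
  forall e' f' : E, e' != f' -> dangling_from G x y e' -> dangling_from G x y f' ->
  exists c : E -> 'I_3, colouring (delv G x y) setT c /\ c e' = c f'.
Proof.
move=> [_ [Hcub _]] _ Hx [Hyu _ Hyv] Hess e' f' Hne [s1 [E1 N1 M1]] [s2 [E2 N2 M2]].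
have xy : x != y by case: Hx => ->; rewrite eq_sym.
pose S := [set d : E * bool | (d.1 \in [set: E]) && (as_mpole G d.1 d.2 == Some x)].
have inS : forall d, (d \in S) = (G d.1 d.2 == x) by move=> d; rewrite !inE.
have cS : #|S| = 3 by apply: Hcub.
have ne12 : (e', s1) != (f', s2) by apply: contraNneq Hne => -[-> _].
have : exists2 d : E * bool, d \in S & d \notin [set (e', s1); (f', s2)].
  apply/subsetPn; apply: contraTN isT => /subset_leq_card.
  by rewrite cS cards2 ne12.
case=> -[g t] gS gn.
rewrite inS /= in gS; rewrite !inE negb_or in gn; case/andP: gn => gn1 gn2.
have ge' : g != e'.
  apply: contraNneq N1 => Eg; subst g.
  have -> : ~~ s1 = t by apply/esym/other_end; apply: contraNneq gn1 => ->.
  by rewrite (eqP gS).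
have gf' : g != f'.
  apply: contraNneq N2 => Eg; subst g.
  have -> : ~~ s2 = t by apply/esym/other_end; apply: contraNneq gn2 => ->.
  by rewrite (eqP gS).
have [f [[b0 Hb0] [gf _ Hsupp]]] := Hess g (ex_intro _ t (eqP gS)).
have fe' : f != e'.
  apply/eqP => Ef; subst f; move: Hb0; case: (eqVneq b0 s1) => [->|/other_end ->].
    by rewrite E1 => Exy; rewrite Exy eqxx in xy.
  by move=> Ey; rewrite Ey eqxx in M1.
have ff' : f != f'.
  apply/eqP => Ef; subst f; move: Hb0; case: (eqVneq b0 s2) => [->|/other_end ->].
    by rewrite E2 => Exy; rewrite Exy eqxx in xy.
  by move=> Ey; rewrite Ey eqxx in M2.
have S3 : S = [set (e', s1); (f', s2); (g, t)].
  apply/eqP; rewrite eq_sym eqEcard cS; apply/andP; split.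
    apply/subsetP => d; rewrite !inE => /orP [/orP [] | ] /eqP -> /=;
      by rewrite /as_mpole ?E1 ?E2 ?(eqP gS) eqxx.
  rewrite setUC cardsU1 cards2 ne12 !inE negb_or.
  rewrite (_ : (g, t) != (e', s1)) /=; last by apply: contraNneq ge' => -[->].
  by rewrite (_ : (g, t) != (f', s2)) //; apply: contraNneq gf' => -[->].
pose A := [set: E] :\ g :\ f.
have Hval : valency (as_mpole G) A x = 2.
  have <- : #|[set (e', s1); (f', s2)]| = 2 by rewrite cards2 ne12.
  rewrite /valency; apply: eq_card => d; rewrite !inE.
  apply/idP/idP.
    case/andP => /and3P [df dg _] dx.
    have : d \in S by rewrite inS; exact: dx.
    rewrite S3 !inE => /orP [/orP [] H | /eqP dE]; [by rewrite H | by rewrite H orbT | by rewrite dE eqxx in dg].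
  case/orP => /eqP -> /=; rewrite /as_mpole ?E1 ?E2 eqxx andbT.
    by rewrite eq_sym fe' eq_sym ge'.
  by rewrite eq_sym ff' eq_sym gf'.
have eA : e' \in A by rewrite !inE eq_sym fe' eq_sym ge'.
have fA : f' \in A by rewrite !inE eq_sym ff' eq_sym gf'.
have [c Hc] := Hsupp x (e', s1) (f', s2) Hval ne12 eA fA E1 E2.
pose c1 := fun e => if e == f' then c e' else c e.
have Hc1 : colouring (delv G x y) A c1.
  pose phi := fun (d : E * bool) => if d.1 == f' then (e', s1) else d.
  have Pin : forall d : E * bool, d.1 \in A -> (phi d).1 \in suppress_set A (f', s2).
    move=> [a b] /= Ha; rewrite /phi /suppress_set /=.
    case: (eqVneq a f') => [_|Na] /=; rewrite in_setD1 /=.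
      by rewrite Hne eA.
    by rewrite Na Ha.
  have Patt : forall d : E * bool, G d.1 d.2 != x ->
      suppress_att (as_mpole G) (e', s1) (f', s2) (phi d).1 (phi d).2 = Some (G d.1 d.2).
    move=> [a b] /= Hax; rewrite /phi /suppress_att /=.
    case: (eqVneq a f') => [Ea|Na] /=.
      subst a; rewrite eqxx /as_mpole /=.
      have -> : b = ~~ s2 by apply: other_end; apply: contraNneq Hax => ->; rewrite E2.
      by [].
    case: eqP => [[Ea Eb]|_] //.
    by rewrite Ea Eb E1 eqxx in Hax.
  have Pc : forall d : E * bool, c (phi d).1 = c1 d.1.
    by move=> [a b]; rewrite /phi /c1 /=; case: eqP.
  have Pinj : forall d d' : E * bool, G d.1 d.2 != x -> G d'.1 d'.2 != x -> phi d = phi d' -> d = d'.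
    move=> [a b] [a' b'] /= H H'; rewrite /phi /=.
    case: (eqVneq a f') => [Ea|Na]; case: (eqVneq a' f') => [Ea'|Na'] //=.
    - subst a a' => _.
      have -> : b = ~~ s2 by apply: other_end; apply: contraNneq H => ->; rewrite E2.
      have -> : b' = ~~ s2 by apply: other_end; apply: contraNneq H' => ->; rewrite E2.
      by [].
    - by case=> Ea2 Eb2; rewrite -Ea2 -Eb2 E1 eqxx in H'.
    - by case=> Ea2 Eb2; rewrite Ea2 Eb2 E1 eqxx in H.
  move=> d1 d2 Hd Hd1 Hd2; rewrite /delv.
  case: ifP => // /negbT; rewrite negb_or => /andP [X1 Y1] _.
  case: ifP => [_ //|/negbT]; rewrite negb_or => /andP [X2 Y2] [Heq].
  rewrite -!Pc; apply: (Hc (phi d1) (phi d2)).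
  - by apply: contraNneq Hd => /(Pinj _ _ X1 X2) ->.
  - exact: Pin.
  - exact: Pin.
  - by rewrite Patt.
  - by rewrite !Patt // Heq.
have Hv : forall z, #|[set d : E * bool | delv G x y d.1 d.2 == Some z]| <= 3.
  move=> z; rewrite -(Hcub z); apply: subset_leq_card; apply/subsetP => d.
  rewrite !inE /delv; case: ifP => // _ /eqP [->]; by rewrite eqxx.
have Ng : delv G x y g t = None by rewrite /delv (eqP gS) eqxx.
have Nf : delv G x y f b0 = None by rewrite /delv Hb0 eqxx orbT.
have [k1 Hk1] := ext Hc1 Ng Hv.
have [k2 Hk2] := ext Hk1 Nf Hv.
exists (fun e => if e == f then k2 else if e == g then k1 else c1 e); split.
  suff -> : [set: E] = f |: (g |: A) by [].
  apply/setP => e; rewrite !inE; by case: (e == f); case: (e == g).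
rewrite [e' == f]eq_sym (negbTE fe') [f' == f]eq_sym (negbTE ff') [e' == g]eq_sym (negbTE ge') [f' == g]eq_sym (negbTE gf').
by rewrite /c1 eqxx (negbTE Hne).
Qed.
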